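(* Let $0\le\alpha\le\beta\le\pi/2$, $P_1,P_2>0$, and let $\theta^*\in[\alpha,\beta]$ be a maximizer of $\phi$ on $[\alpha,\beta]$. (i) On $[\theta^*,\beta]$ consider the upper-diagonal corner curve $x(\theta)=\frac12\ln(1+\phi(\theta))-\frac12\ln(1+\phi_2(\theta))$, $y(\theta)=\frac12\ln(1+\phi_2(\theta))$; then along this curve $\frac{d^2y}{dx^2}\le0$, i.e. $y$ is a concave function of $x$. (ii) On $[\alpha,\theta^*]$ consider the lower-diagonal corner curve $x(\theta)=\frac12\ln(1+\phi_1(\theta))$, $y(\theta)=\frac12\ln(1+\phi(\theta))-\frac12\ln(1+\phi_1(\theta))$; then along this curve $y$ is likewise a concave function of $x$.
   Context: $\phi_1(\theta)=P_1\cos^2(\theta-\alpha)$, $\phi_2(\theta)=P_2\cos^2(\theta-\beta)$, $\phi=\phi_1+\phi_2$. These curves are the corner points (maximizing $R_2$ then $R_1$, resp. $R_1$ then $R_2$, on the dominant face) of the pentagonal rate sets $\{(R_1,R_2)\ge0:R_1\le\mathcal C(\phi_1(\theta)),R_2\le\mathcal C(\phi_2(\theta)),R_1+R_2\le\mathcal C(\phi(\theta))\}$, with rates in nats. *)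

(* Defs.v *)
From Stdlib Require Import Reals.
Open Scope R_scope.

Definition Cap (p : R) : R := / 2 * ln (1 + p).

Definition phi1 (P1 alpha theta : R) : R := P1 * (cos (theta - alpha)) ^ 2.
Definition phi2 (P2 beta theta : R) : R := P2 * (cos (theta - beta)) ^ 2.
Definition phi (P1 P2 alpha beta theta : R) : R :=
  phi1 P1 alpha theta + phi2 P2 beta theta.

Definition concave_on (S : R -> Prop) (g : R -> R) : Prop :=
  forall u v t, S u -> S v -> 0 <= t <= 1 ->
    t * g u + (1 - t) * g v <= g (t * u + (1 - t) * v).

(* "y is a concave function of x along the curve theta |-> (x theta, y theta),
   theta in [a,b]": there is g, concave on the range of x over [a,b],
   with y theta = g (x theta) for all theta in [a,b]. *)
Definition concave_curve (x y : R -> R) (a b : R) : Prop :=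
  exists g : R -> R,
    concave_on (fun u => exists th, a <= th <= b /\ u = x th) g /\
    forall th, a <= th <= b -> y th = g (x th).

(* Main.v *)
Require Import Defs.
From Stdlib Require Import Reals Lra Psatz ClassicalEpsilon.
From Coquelicot Require Import Coquelicot.
Open Scope R_scope.

Lemma cmvt (f g df dg : R -> R) a b : a < b ->
  (forall t, is_derive f t (df t)) -> (forall t, is_derive g t (dg t)) ->
  exists c, a < c < b /\ (g b - g a) * df c = (f b - f a) * dg c.
Proof.
  intros Hab Hf Hg.
  assert (pf : forall c, a < c < b -> derivable_pt f c).
  { intros c _. exists (df c). apply is_derive_Reals, Hf. }
  assert (pg : forall c, a < c < b -> derivable_pt g c).
  { intros c _. exists (dg c). apply is_derive_Reals, Hg. }
  destruct (MVT f g a b pf pg Hab) as [c [P E]].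
  - intros c _. apply derivable_continuous_pt. exists (df c). apply is_derive_Reals, Hf.
  - intros c _. apply derivable_continuous_pt. exists (dg c). apply is_derive_Reals, Hg.
  - exists c. split; [exact P|].
    rewrite (derive_pt_eq_0 f c (df c) (pf c P)) in E by (apply is_derive_Reals, Hf).
    rewrite (derive_pt_eq_0 g c (dg c) (pg c P)) in E by (apply is_derive_Reals, Hg).
    exact E.
Qed.

Lemma cont_of (f df : R -> R) : (forall t, is_derive f t (df t)) -> continuity f.
Proof.
  intros H t. apply derivable_continuous_pt. exists (df t). apply is_derive_Reals, H.
Qed.

Section G.
Variables (x y dx dy : R -> R) (a b : R).
Hypothesis Hx : forall t, is_derive x t (dx t).
Hypothesis Hy : forall t, is_derive y t (dy t).
Hypothesis Hdx : forall t, a < t < b -> dx t < 0.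
Hypothesis Hq : forall t1 t2, a < t1 -> t1 < t2 -> t2 < b -> dy t1 / dx t1 <= dy t2 / dx t2.

Lemma decr t1 t2 : a <= t1 -> t1 < t2 -> t2 <= b -> x t2 < x t1.
Proof.
  intros H1 H2 H3.
  destruct (cmvt x (fun t => t) dx (fun _ => 1) t1 t2 H2 Hx) as [c [Hc E]].
  - intros t. apply (is_derive_id t).
  - assert (dx c < 0) by (apply Hdx; lra). nra.
Qed.

Lemma chord t1 t2 t3 : a <= t1 -> t1 < t2 -> t2 < t3 -> t3 <= b ->
  (y t2 - y t1) * (x t3 - x t2) <= (y t3 - y t2) * (x t2 - x t1).
Proof.
  intros H1 H2 H3 H4.
  destruct (cmvt y x dy dx t1 t2 H2 Hy Hx) as [c1 [Hc1 E1]].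
  destruct (cmvt y x dy dx t2 t3 H3 Hy Hx) as [c2 [Hc2 E2]].
  assert (Q := Hq c1 c2 ltac:(lra) ltac:(lra) ltac:(lra)).
  assert (d1 : dx c1 < 0) by (apply Hdx; lra).
  assert (d2 : dx c2 < 0) by (apply Hdx; lra).
  assert (e12 : x t2 < x t1) by (apply decr; lra).
  assert (e23 : x t3 < x t2) by (apply decr; lra).
  set (q1 := dy c1 / dx c1) in *. set (q2 := dy c2 / dx c2) in *.
  assert (dy c1 = q1 * dx c1) by (unfold q1; field; lra).
  assert (dy c2 = q2 * dx c2) by (unfold q2; field; lra).
  assert (F1 : y t2 - y t1 = q1 * (x t2 - x t1)).
  { apply (Rmult_eq_reg_r (dx c1)); [|lra]. nra. }
  assert (F2 : y t3 - y t2 = q2 * (x t3 - x t2)).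
  { apply (Rmult_eq_reg_r (dx c2)); [|lra]. nra. }
  rewrite F1, F2.
  assert (0 < (x t2 - x t1) * (x t3 - x t2)) by nra.
  assert (0 <= (q2 - q1) * ((x t2 - x t1) * (x t3 - x t2))) by (apply Rmult_le_pos; lra).
  nra.
Qed.

Lemma mid t1 t3 t : a <= t1 -> t1 <= t3 -> t3 <= b -> 0 <= t <= 1 ->
  exists t2, t1 <= t2 <= t3 /\ x t2 = t * x t1 + (1 - t) * x t3 /\
     t * y t1 + (1 - t) * y t3 <= y t2.
Proof.
  intros H1 H2 H3 Ht.
  destruct (Req_dec t1 t3) as [E|NE].
  { subst. exists t3. split; [lra|]. split; ring_simplify; lra. }
  assert (Hlt : t1 < t3) by lra.
  assert (D : x t3 < x t1) by (apply decr; lra).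
  set (w := t * x t1 + (1 - t) * x t3).
  destruct (IVT_cor (fun s => x s - w) t1 t3) as [t2 [Ht2 E2]].
  - apply continuity_minus; [apply (cont_of x dx Hx)|apply continuity_const; intros ??; reflexivity].
  - lra.
  - unfold w. replace (x t1 - (t * x t1 + (1 - t) * x t3)) with ((1-t) * (x t1 - x t3)) by ring.
    replace (x t3 - (t * x t1 + (1 - t) * x t3)) with (t * (x t3 - x t1)) by ring.
    replace ((1 - t) * (x t1 - x t3) * (t * (x t3 - x t1))) with (- (t * (1 - t) * ((x t1 - x t3) * (x t1 - x t3)))) by ring.
    assert (0 <= t * (1 - t)) by nra. assert (0 <= (x t1 - x t3) * (x t1 - x t3)) by nra. nra.
  - exists t2. split; [lra|]. split; [lra|].
    destruct (Req_dec t2 t1) as [E|N1].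
    { subst t2. assert (t = 1).
      { unfold w in E2. assert ((1 - t) * (x t1 - x t3) = 0) by lra.
        destruct (Rmult_integral _ _ H) ; lra. }
      subst. lra. }
    destruct (Req_dec t2 t3) as [E|N3].
    { subst t2. assert (t = 0).
      { unfold w in E2. assert (t * (x t1 - x t3) = 0) by lra.
        destruct (Rmult_integral _ _ H) ; lra. }
      subst. lra. }
    assert (C := chord t1 t2 t3 H1 ltac:(lra) ltac:(lra) H3).
    assert (x t2 = w) by lra. rewrite H in C. unfold w in C.
    replace (w - x t1) with ((1-t) * (x t3 - x t1)) in C by (unfold w; ring).
    replace (x t3 - w) with (t * (x t3 - x t1)) in C by (unfold w; ring).
    nra.
Qed.

Lemma gen_concave : concave_curve x y a b.
Proof.
  set (P := fun u th => a <= th <= b /\ x th = u).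
  exists (fun u => y (epsilon (inhabits 0) (P u))).
  assert (K : forall th, a <= th <= b -> epsilon (inhabits 0) (P (x th)) = th).
  { intros th Hth. destruct (epsilon_spec (inhabits 0) (P (x th))) as [H1 H2].
    - exists th. split; auto.
    - set (e := epsilon (inhabits 0) (P (x th))) in *.
      destruct (Rtotal_order e th) as [L|[L|L]]; auto.
      + assert (x th < x e) by (apply decr; lra). lra.
      + assert (x e < x th) by (apply decr; lra). lra. }
  split.
  - intros u v t [tu [Hu ->]] [tv [Hv ->]] Ht.
    destruct (Rle_lt_dec tu tv) as [L|L].
    + destruct (mid tu tv t ltac:(lra) L ltac:(lra) Ht) as [t2 [R1 [R2 R3]]].
      rewrite <- R2, !K; lra.
    + destruct (mid tv tu (1 - t) ltac:(lra) ltac:(lra) ltac:(lra) ltac:(lra)) as [t2 [R1 [R2 R3]]].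
      replace (t * x tu + (1 - t) * x tv) with ((1 - t) * x tv + (1 - (1 - t)) * x tu) by ring.
      rewrite <- R2, !K; lra.
  - intros th Hth. rewrite K; auto.
Qed.
End G.

Lemma Cap_der (f : R -> R) df t : is_derive f t df -> 0 < 1 + f t ->
  is_derive (fun t => Cap (f t)) t (/2 * (df / (1 + f t))).
Proof.
  intros H Hp. unfold Cap. auto_derive.
  - split; [exists df; exact H|split; [exact Hp|exact I]].
  - replace (Derive (fun x => f x) t) with df by (symmetry; apply is_derive_unique; exact H). field. lra.
Qed.

Section S.
Variables (alpha beta P1 P2 : R).
Hypotheses (Ha : 0 <= alpha) (Hab : alpha <= beta) (Hb : beta <= PI / 2) (H1 : 0 < P1) (H2 : 0 < P2).

Let a t := phi1 P1 alpha t.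
Let b t := phi2 P2 beta t.
Let f t := phi P1 P2 alpha beta t.
Let A t := - (P1 * sin (2 * (t - alpha))).
Let B t := P2 * sin (2 * (beta - t)).

Lemma da t : is_derive a t (A t).
Proof. unfold a, A, phi1. auto_derive; auto. rewrite sin_2a. unfold Rminus. ring. Qed.

Lemma db t : is_derive b t (B t).
Proof. unfold b, B, phi2. auto_derive; auto.
  replace (2 * (beta - t)) with (- (2 * (t - beta))) by ring.
  rewrite sin_neg, sin_2a. unfold Rminus. ring. Qed.

Lemma df t : is_derive f t (A t + B t).
Proof. apply (is_derive_plus a b). apply da. apply db. Qed.

Lemma a_ge0 t : 0 <= a t.
Proof. unfold a, phi1. apply Rmult_le_pos; [lra|]. apply pow2_ge_0. Qed.
Lemma b_ge0 t : 0 <= b t.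
Proof. unfold b, phi2. apply Rmult_le_pos; [lra|]. apply pow2_ge_0. Qed.
Lemma f_eq t : f t = a t + b t.
Proof. reflexivity. Qed.

Lemma A_neg t : alpha < t < beta -> A t < 0.
Proof. intros Ht. unfold A. assert (0 < sin (2 * (t - alpha))).
  { apply sin_gt_0; lra. } nra. Qed.
Lemma B_pos t : alpha < t < beta -> 0 < B t.
Proof. intros Ht. unfold B. assert (0 < sin (2 * (beta - t))).
  { apply sin_gt_0; lra. } nra. Qed.

Lemma key t1 t2 : alpha <= t1 -> t1 <= t2 -> t2 <= beta -> A t2 * B t1 <= A t1 * B t2.
Proof.
  intros h1 h2 h3. unfold A, B.
  set (u := 2 * (t1 - alpha)). set (v := 2 * (t2 - alpha)). set (D := 2 * (beta - alpha)).
  replace (2 * (beta - t1)) with (D - u) by (unfold D, u; ring).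
  replace (2 * (beta - t2)) with (D - v) by (unfold D, v; ring).
  assert (E : sin v * sin (D - u) - sin u * sin (D - v) = sin D * sin (v - u)).
  { rewrite !sin_minus. ring. }
  assert (0 <= sin D) by (apply sin_ge_0; unfold D; lra).
  assert (0 <= sin (v - u)) by (apply sin_ge_0; unfold u, v; lra).
  assert (0 <= sin D * sin (v - u)) by (apply Rmult_le_pos; lra).
  assert (0 <= P1 * P2) by nra.
  assert (0 <= P1 * P2 * (sin D * sin (v - u))) by (apply Rmult_le_pos; lra).
  nra.
Qed.

Lemma cos_mono x1 x2 : 0 <= x1 -> x1 <= x2 -> x2 <= PI / 2 -> cos x2 ^ 2 <= cos x1 ^ 2.
Proof.
  intros. assert (0 <= cos x2) by (apply cos_ge_0; lra).
  destruct (Req_dec x1 x2) as [E|N]; [subst; lra|].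
  assert (cos x2 < cos x1) by (apply cos_decreasing_1; lra). nra.
Qed.

Lemma a_mono t1 t2 : alpha <= t1 -> t1 <= t2 -> t2 <= beta -> a t2 <= a t1.
Proof. intros. unfold a, phi1. apply Rmult_le_compat_l; [lra|]. apply cos_mono; lra. Qed.
Lemma b_mono t1 t2 : alpha <= t1 -> t1 <= t2 -> t2 <= beta -> b t1 <= b t2.
Proof. intros. unfold b, phi2. apply Rmult_le_compat_l; [lra|].
  replace (t1 - beta) with (- (beta - t1)) by ring. replace (t2 - beta) with (- (beta - t2)) by ring.
  rewrite !cos_neg. apply cos_mono; lra. Qed.


Lemma div_le x y z w : 0 < y -> 0 < w -> x * w <= z * y -> x / y <= z / w.
Proof.
  intros hy hw h.
  replace (x / y) with (x * w * / (y * w)) by (field; lra).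
  replace (z / w) with (z * y * / (y * w)) by (field; lra).
  apply Rmult_le_compat_r; [|exact h].
  left. apply Rinv_0_lt_compat. nra.
Qed.

Lemma f_pos t : 0 < 1 + f t.
Proof. rewrite f_eq. pose proof (a_ge0 t). pose proof (b_ge0 t). lra. Qed.
Lemma a_pos t : 0 < 1 + a t.
Proof. pose proof (a_ge0 t). lra. Qed.
Lemma b_pos t : 0 < 1 + b t.
Proof. pose proof (b_ge0 t). lra. Qed.

Lemma dphi_neg ts t : alpha <= ts -> (forall th, alpha <= th <= beta -> f th <= f ts) ->
  ts < t < beta -> A t + B t <= 0.
Proof.
  intros hts hmax ht. destruct (Rle_or_lt (A t + B t) 0) as [h|h]; [exact h|exfalso].
  destruct (cmvt f (fun s => s) (fun s => A s + B s) (fun _ => 1) ts t ltac:(lra) df (fun s => is_derive_id s)) as [c [hc E]].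
  assert (K := key c t ltac:(lra) ltac:(lra) ltac:(lra)).
  assert (hBc := B_pos c ltac:(lra)). assert (hBt := B_pos t ltac:(lra)).
  assert (0 < (A c + B c) * B t) by nra.
  assert (0 < A c + B c) by (apply (Rmult_lt_reg_r (B t)); lra).
  assert (f t <= f ts) by (apply hmax; lra). nra.
Qed.

Lemma dphi_pos ts t : ts <= beta -> (forall th, alpha <= th <= beta -> f th <= f ts) ->
  alpha < t < ts -> 0 <= A t + B t.
Proof.
  intros hts hmax ht. destruct (Rle_or_lt 0 (A t + B t)) as [h|h]; [exact h|exfalso].
  destruct (cmvt f (fun s => s) (fun s => A s + B s) (fun _ => 1) t ts ltac:(lra) df (fun s => is_derive_id s)) as [c [hc E]].
  assert (K := key t c ltac:(lra) ltac:(lra) ltac:(lra)).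
  assert (hBc := B_pos c ltac:(lra)). assert (hBt := B_pos t ltac:(lra)).
  assert ((A c + B c) * B t < 0) by nra.
  assert (A c + B c < 0).
  { destruct (Rle_or_lt 0 (A c + B c)); [|assumption]. nra. }
  assert (f t <= f ts) by (apply hmax; lra). nra.
Qed.

Lemma part1 ts : alpha <= ts <= beta -> (forall th, alpha <= th <= beta -> f th <= f ts) ->
  concave_curve (fun th => Cap (f th) - Cap (b th)) (fun th => Cap (b th)) ts beta.
Proof.
  intros hts hmax.
  set (S t := (1 + A t / B t) * ((1 + b t) / (1 + f t))).
  apply (gen_concave _ _ (fun t => /2 * ((A t + B t) / (1 + f t)) - /2 * (B t / (1 + b t)))
                         (fun t => /2 * (B t / (1 + b t)))).
  - intros t. apply (is_derive_minus (fun t => Cap (f t)) (fun t => Cap (b t))).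
    + apply Cap_der. apply df. apply f_pos.
    + apply Cap_der. apply db. apply b_pos.
  - intros t. apply Cap_der. apply db. apply b_pos.
  - intros t ht. assert (hA := A_neg t ltac:(lra)). assert (hB := B_pos t ltac:(lra)).
    pose proof (a_ge0 t). pose proof (b_ge0 t). pose proof (f_pos t).
    replace (/ 2 * ((A t + B t) / (1 + f t)) - / 2 * (B t / (1 + b t)))
      with (/2 * ((A t * (1 + b t) - a t * B t) / ((1 + f t) * (1 + b t))))
      by (rewrite f_eq; field; split; lra).
    assert (0 < (1 + f t) * (1 + b t)) by nra.
    assert (A t * (1 + b t) - a t * B t < 0) by nra.
    assert ((A t * (1 + b t) - a t * B t) / ((1 + f t) * (1 + b t)) < 0).
    { unfold Rdiv. assert (0 < / ((1 + f t) * (1 + b t))) by (apply Rinv_0_lt_compat; lra). nra. }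
    lra.
  - intros t1 t2 h1 h12 h2.
    assert (G : forall t, ts < t < beta ->
      / 2 * ((A t + B t) / (1 + f t)) - / 2 * (B t / (1 + b t)) = /2 * (B t / (1 + b t)) * (S t - 1)
      /\ S t < 1).
    { intros t ht. assert (hA := A_neg t ltac:(lra)). assert (hB := B_pos t ltac:(lra)).
      pose proof (a_ge0 t). pose proof (b_ge0 t). pose proof (f_pos t).
      assert (E : / 2 * ((A t + B t) / (1 + f t)) - / 2 * (B t / (1 + b t)) = /2 * (B t / (1 + b t)) * (S t - 1)).
      { unfold S. field. lra. }
      split; [exact E|].
      assert (S t = 1 + (A t * (1 + b t) - a t * B t) / (B t * (1 + f t))).
      { unfold S. rewrite f_eq. field. rewrite <- f_eq. lra. }
      assert (A t * (1 + b t) - a t * B t < 0) by nra.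
      assert (0 < B t * (1 + f t)) by nra.
      assert ((A t * (1 + b t) - a t * B t) / (B t * (1 + f t)) < 0).
      { unfold Rdiv. assert (0 < / (B t * (1 + f t))) by (apply Rinv_0_lt_compat; lra). nra. }
      lra. }
    destruct (G t1 ltac:(lra)) as [E1 L1]. destruct (G t2 ltac:(lra)) as [E2 L2].
    rewrite E1, E2.
    assert (hB1 := B_pos t1 ltac:(lra)). assert (hB2 := B_pos t2 ltac:(lra)).
    pose proof (b_pos t1). pose proof (b_pos t2).
    assert (0 < B t1 / (1 + b t1)) by (apply Rdiv_lt_0_compat; lra).
    assert (0 < B t2 / (1 + b t2)) by (apply Rdiv_lt_0_compat; lra).
    replace (/ 2 * (B t1 / (1 + b t1)) / (/ 2 * (B t1 / (1 + b t1)) * (S t1 - 1))) with (- / (1 - S t1)) by (field; lra).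
    replace (/ 2 * (B t2 / (1 + b t2)) / (/ 2 * (B t2 / (1 + b t2)) * (S t2 - 1))) with (- / (1 - S t2)) by (field; lra).
    assert (S t2 <= S t1).
    { unfold S.
      assert (K := key t1 t2 ltac:(lra) ltac:(lra) ltac:(lra)).
      assert (R1 : A t2 / B t2 <= A t1 / B t1) by (apply div_le; lra).
      assert (N1 := dphi_neg ts t1 ltac:(lra) hmax ltac:(lra)).
      assert (R2 : 1 + A t1 / B t1 <= 0).
      { replace (1 + A t1 / B t1) with ((A t1 + B t1) / B t1) by (field; lra).
        unfold Rdiv. assert (0 < / B t1) by (apply Rinv_0_lt_compat; lra). nra. }
      assert (F : (1 + b t1) / (1 + f t1) <= (1 + b t2) / (1 + f t2)).
      { apply div_le; try apply f_pos. rewrite !f_eq.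
        pose proof (a_mono t1 t2 ltac:(lra) ltac:(lra) ltac:(lra)).
        pose proof (b_mono t1 t2 ltac:(lra) ltac:(lra) ltac:(lra)).
        pose proof (a_ge0 t1). pose proof (a_ge0 t2). nra. }
      assert (0 < (1 + b t2) / (1 + f t2)) by (apply Rdiv_lt_0_compat; [lra|apply f_pos]).
      assert (0 <= (A t1 / B t1 - A t2 / B t2) * ((1 + b t2) / (1 + f t2))) by (apply Rmult_le_pos; lra).
      assert ((1 + A t1 / B t1) * ((1 + b t2) / (1 + f t2) - (1 + b t1) / (1 + f t1)) <= 0).
      { apply Rmult_le_0_r; lra. }
      nra. }
    apply Ropp_le_contravar. apply Rinv_le_contravar; lra.
Qed.

Lemma part2 ts : alpha <= ts <= beta -> (forall th, alpha <= th <= beta -> f th <= f ts) ->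
  concave_curve (fun th => Cap (a th)) (fun th => Cap (f th) - Cap (a th)) alpha ts.
Proof.
  intros hts hmax.
  set (T t := (1 + B t / A t) * ((1 + a t) / (1 + f t))).
  apply (gen_concave _ _ (fun t => /2 * (A t / (1 + a t)))
                         (fun t => /2 * ((A t + B t) / (1 + f t)) - /2 * (A t / (1 + a t)))).
  - intros t. apply Cap_der. apply da. apply a_pos.
  - intros t. apply (is_derive_minus (fun t => Cap (f t)) (fun t => Cap (a t))).
    + apply Cap_der. apply df. apply f_pos.
    + apply Cap_der. apply da. apply a_pos.
  - intros t ht. assert (hA := A_neg t ltac:(lra)). pose proof (a_pos t).
    assert (A t / (1 + a t) < 0).
    { unfold Rdiv. assert (0 < / (1 + a t)) by (apply Rinv_0_lt_compat; lra). nra. }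
    lra.
  - intros t1 t2 h1 h12 h2.
    assert (G : forall t, alpha < t < ts ->
      (/ 2 * ((A t + B t) / (1 + f t)) - / 2 * (A t / (1 + a t))) / (/2 * (A t / (1 + a t))) = T t - 1).
    { intros t ht. assert (hA := A_neg t ltac:(lra)).
      pose proof (a_pos t). pose proof (f_pos t).
      unfold T. field. split; lra. }
    rewrite (G t1 ltac:(lra)), (G t2 ltac:(lra)).
    cut (T t1 <= T t2); [lra|].
    unfold T.
    assert (hA1 := A_neg t1 ltac:(lra)). assert (hA2 := A_neg t2 ltac:(lra)).
    assert (K := key t1 t2 ltac:(lra) ltac:(lra) ltac:(lra)).
    assert (R1 : B t1 / A t1 <= B t2 / A t2).
    { replace (B t1 / A t1) with ((- B t1) / (- A t1)) by (field; lra).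
      replace (B t2 / A t2) with ((- B t2) / (- A t2)) by (field; lra).
      apply div_le; lra. }
    assert (N2 := dphi_pos ts t2 ltac:(lra) hmax ltac:(lra)).
    assert (R2 : 1 + B t2 / A t2 <= 0).
    { replace (1 + B t2 / A t2) with ((- (A t2 + B t2)) / (- A t2)) by (field; lra).
      unfold Rdiv. assert (0 < / (- A t2)) by (apply Rinv_0_lt_compat; lra). nra. }
    assert (F : (1 + a t2) / (1 + f t2) <= (1 + a t1) / (1 + f t1)).
    { apply div_le; try apply f_pos. rewrite !f_eq.
      pose proof (a_mono t1 t2 ltac:(lra) ltac:(lra) ltac:(lra)).
      pose proof (b_mono t1 t2 ltac:(lra) ltac:(lra) ltac:(lra)).
      pose proof (b_ge0 t1). pose proof (b_ge0 t2). pose proof (a_ge0 t2). nra. }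
    assert (0 < (1 + a t1) / (1 + f t1)) by (apply Rdiv_lt_0_compat; [apply a_pos|apply f_pos]).
    assert (0 <= (B t2 / A t2 - B t1 / A t1) * ((1 + a t1) / (1 + f t1))) by (apply Rmult_le_pos; lra).
    assert ((1 + B t2 / A t2) * ((1 + a t1) / (1 + f t1) - (1 + a t2) / (1 + f t2)) <= 0).
    { apply Rmult_le_0_r; lra. }
    nra.
Qed.

End S.

Theorem lemma8 (alpha beta P1 P2 thstar : R) :
  0 <= alpha -> alpha <= beta -> beta <= PI / 2 ->
  0 < P1 -> 0 < P2 ->
  alpha <= thstar <= beta ->
  (forall th, alpha <= th <= beta ->
     phi P1 P2 alpha beta th <= phi P1 P2 alpha beta thstar) ->
  (* (i) upper-diagonal corner curve on [thstar, beta] *)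
  concave_curve
    (fun th => Cap (phi P1 P2 alpha beta th) - Cap (phi2 P2 beta th))
    (fun th => Cap (phi2 P2 beta th))
    thstar beta
  /\
  (* (ii) lower-diagonal corner curve on [alpha, thstar] *)
  concave_curve
    (fun th => Cap (phi1 P1 alpha th))
    (fun th => Cap (phi P1 P2 alpha beta th) - Cap (phi1 P1 alpha th))
    alpha thstar.
Proof.
  intros h1 h2 h3 h4 h5 h6 h7. split.
  - exact (part1 alpha beta P1 P2 h1 h2 h3 h4 h5 thstar h6 h7).
  - exact (part2 alpha beta P1 P2 h1 h2 h3 h4 h5 thstar h6 h7).
Qed.
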